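(* For any $h\in BV([0,1];\mathbb R^d)$ and $g\in D([0,1];\mathbb R^d)$, $$\int_0^1|g(s)-h(s)|ds\le 2d(\operatorname{Var}(h)-|h(0)|+1)\rho_2(g,h)+\pi d\,\rho_2^2(g,h)$$ and $$\int_0^1|g(s)-h(s)|ds\le 2d(\operatorname{Var}(h)+1)\rho_2'(g,h)+\pi d\,(\rho_2')^2(g,h).$$
   Context: $D([0,1];\mathbb R^d)$ is the set of càdlàg functions $[0,1]\to\mathbb R^d$; $|\cdot|$ is the Euclidean norm. For $h\in D$ and finite $\mathbf t\subset(0,1]$, $h^{\mathbf t}$ is the continuous function linear between consecutive points of $\mathbf t\cup\{0,1\}$ with $h^{\mathbf t}(0)=0$, $h^{\mathbf t}(s)=h(s)$ for $s\in\mathbf t\cup\{1\}$; $\operatorname{Var}(h):=\sup_{\mathbf t}\int_0^1|(h^{\mathbf t})'|ds$ over finite $\mathbf t\subset(0,1]$, and $BV=\{h\in D:\operatorname{Var}(h)<\infty\}$. Completed graph: $\Gamma h:=\{(t,x)\in[0,1]\times\mathbb R^d: x\in[h(t-),h(t)]\}$ with the convention $h(0-):=h(0)$ ($[a,b]$ the line segment); modified completed graph $\Gamma'h$: the same but with the convention $h(0-):=0$ (so $\Gamma'h=\Gamma h\cup(\{0\}\times[0,h(0)])$). $\rho_2(g,h)$ is the Hausdorff distance between $\Gamma g$ and $\Gamma h$ in $\mathbb R^{d+1}$, and $\rho_2'(g,h)$ is the Hausdorff distance between $\Gamma'g$ and $\Gamma'h$. *)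

(* Defs.v *)
From mathcomp Require Import all_boot all_order all_algebra.
From mathcomp Require Import all_classical all_reals all_analysis.
Set Implicit Arguments. Unset Strict Implicit. Unset Printing Implicit Defensive.
Import Order.TTheory GRing.Theory Num.Theory.
Import numFieldNormedType.Exports.
Local Open Scope classical_set_scope.
Local Open Scope ring_scope.

Section Defs.
Variables (R : realType) (d : nat).

Definition eucl (v : 'rV[R]_d) : R := Num.sqrt (\sum_(i < d) v ord0 i ^+ 2).

Definition dist1 (p q : R * 'rV[R]_d) : R :=
  Num.sqrt ((p.1 - q.1) ^+ 2 + \sum_(i < d) (p.2 ord0 i - q.2 ord0 i) ^+ 2).

Definition cadlag (h : R -> 'rV[R]_d) : Prop :=
  (forall t, 0 <= t < 1 -> h x @[x --> t^'+] --> h t) /\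
  (forall t, 0 < t <= 1 -> cvg (h x @[x --> t^'-])).

Definition leftlim (h : R -> 'rV[R]_d) (t : R) : 'rV[R]_d :=
  if t == 0 then h 0 else lim (h x @[x --> t^'-]).

Definition leftlim' (h : R -> 'rV[R]_d) (t : R) : 'rV[R]_d :=
  if t == 0 then 0 else lim (h x @[x --> t^'-]).

Definition segment (a b : 'rV[R]_d) : set 'rV[R]_d :=
  [set a + l *: (b - a) | l in `[0, 1]%classic].

Definition cgraph_with (hm : R -> 'rV[R]_d) (h : R -> 'rV[R]_d)
  : set (R * 'rV[R]_d) :=
  [set p | 0 <= p.1 <= 1 /\ segment (hm p.1) (h p.1) p.2].

Definition cgraph (h : R -> 'rV[R]_d) := cgraph_with (leftlim h) h.
Definition cgraph' (h : R -> 'rV[R]_d) := cgraph_with (leftlim' h) h.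

Definition hausdorff (A B : set (R * 'rV[R]_d)) : \bar R :=
  maxe (ereal_sup [set ereal_inf [set (dist1 p q)%:E | q in B] | p in A])
       (ereal_sup [set ereal_inf [set (dist1 p q)%:E | p in A] | q in B]).

Definition rho2 (g h : R -> 'rV[R]_d) : \bar R := hausdorff (cgraph g) (cgraph h).
Definition rho2' (g h : R -> 'rV[R]_d) : \bar R := hausdorff (cgraph' g) (cgraph' h).

(* For a finite t ⊂ (0,1], listed increasingly as s, ∫_0^1 |(h^t)'| equals the
   length of the polygon 0 -> h(t_1) -> ... -> h(t_k) -> h(1). *)
Definition poly_length (h : R -> 'rV[R]_d) (s : seq R) : R :=
  \sum_(x <- pairmap (fun a b => eucl (b - a)) 0 [seq h u | u <- rcons s 1]) x.

Definition admissible_pts (s : seq R) : Prop :=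
  sorted <%R s /\ all (fun u => (0 < u) && (u <= 1)) s.

Definition Var (h : R -> 'rV[R]_d) : \bar R :=
  ereal_sup [set (poly_length h s)%:E | s in admissible_pts].

Definition BV (h : R -> 'rV[R]_d) : Prop := cadlag h /\ (Var h < +oo)%E.

End Defs.

(* Main.v *)
Require Import Defs.
From mathcomp Require Import all_boot all_order all_algebra.
From mathcomp Require Import all_classical all_reals all_analysis.
From mathcomp Require Import ring lra zify.
Import Order.TTheory GRing.Theory Num.Theory.
Import numFieldNormedType.Exports.
Local Open Scope classical_set_scope.
Local Open Scope ring_scope.

Set Implicit Arguments. Unset Strict Implicit. Unset Printing Implicit Defensive.

Section Eucl.
Variables (R : realType) (d : nat).
Implicit Types (v : 'rV[R]_d).

Lemma eucl_ge0 v : 0 <= eucl v.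
Proof. exact: sqrtr_ge0. Qed.

Lemma eucl0 : eucl (0 : 'rV[R]_d) = 0.
Proof.
rewrite /eucl big1 ?sqrtr0// => i _; by rewrite mxE expr0n.
Qed.

Lemma euclN v : eucl (- v) = eucl v.
Proof. rewrite /eucl; congr Num.sqrt; apply: eq_bigr => i _; by rewrite mxE sqrrN. Qed.

Lemma euclB v w : eucl (v - w) = eucl (w - v).
Proof. by rewrite -euclN opprB. Qed.

Lemma coord_le_eucl v i : `|v ord0 i| <= eucl v.
Proof.
rewrite -sqrtr_sqr /eucl ler_wsqrtr// (bigD1 i)//= lerDl.
by apply: sumr_ge0 => j _; rewrite sqr_ge0.
Qed.

Lemma eucl_le_bound v B : 0 <= B -> (forall i, `|v ord0 i| <= B) ->
  eucl v <= d%:R * B.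
Proof.
move=> B0 Hv; rewrite /eucl.
have -> : d%:R * B = Num.sqrt ((d%:R * B) ^+ 2).
  by rewrite sqrtr_sqr ger0_norm// mulr_ge0.
apply: ler_wsqrtr.
apply: (@le_trans _ _ (\sum_(i < d) B ^+ 2)).
  apply: ler_sum => i _; rewrite -real_normK ?num_real//.
  by rewrite lerXn2r// ?nnegrE.
rewrite sumr_const card_ord exprMn -[_ *+ d]mulr_natl ler_wpM2r ?sqr_ge0//.
case: d => [|n]; first by rewrite expr0n.
by rewrite expr2 ler_peMl// ler1n.
Qed.

Lemma eucl_continuous : continuous (@eucl R d).
Proof.
move=> v; apply: continuous_comp; last exact: sqrt_continuous.
rewrite /=.
suff H : forall n (F : 'I_n -> 'rV[R]_d -> R),
    (forall i, continuous (F i)) -> continuous (fun w => \sum_(i < n) F i w).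
  apply: (H d (fun i w => w ord0 i ^+ 2)) => i.
  have Hc := @coord_continuous R 1 d ord0 i.
  move=> w; exact: (cvgM (Hc w) (Hc w)).
elim=> [|n IH] F HF.
  rewrite (_ : (fun w => \sum_(i < 0) F i w) = fun=> 0); first exact: cst_continuous.
  by apply: funext => x; rewrite big_ord0.
rewrite (_ : (fun w => \sum_(i < n.+1) F i w) = fun w =>
   \sum_(i < n) F (widen_ord (leqnSn n) i) w + F ord_max w); last first.
  by apply: funext => x; rewrite big_ord_recr.
move=> w; have HH := (IH (fun i => F (widen_ord (leqnSn n) i)) (fun i => HF _) w).
exact: (cvgD HH (HF _ w)).
Qed.

End Eucl.

Section Chain.
Variables (R : realType) (d : nat).

Definition chain (z : 'rV[R]_d) (xs : seq 'rV[R]_d) : R :=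
  \sum_(x <- pairmap (fun a b => eucl (b - a)) z xs) x.

Lemma chain_nil z : chain z [::] = 0.
Proof. by rewrite /chain big_nil. Qed.

Lemma chain_cons z x xs : chain z (x :: xs) = eucl (x - z) + chain x xs.
Proof. by rewrite /chain /= big_cons. Qed.

Lemma chain_rcons z xs y :
  chain z (rcons xs y) = chain z xs + eucl (y - last z xs).
Proof.
elim: xs z => [|x xs IH] z /=.
  by rewrite chain_cons !chain_nil add0r addr0.
by rewrite !chain_cons IH addrA.
Qed.

Lemma poly_lengthE (h : R -> 'rV[R]_d) s :
  poly_length h s = chain 0 [seq h u | u <- rcons s 1].
Proof. by []. Qed.

Definition adm (x : R) (s : seq R) : Prop := path <%R 0 (rcons s x).

Lemma path_le_last (a : R) s : path <%R a s ->
  all (fun u => u <= last a s) s /\ a <= last a s.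
Proof.
elim: s a => [|y s IH] a /=; first by [].
move=> /andP[ay /IH[H1 H2]]; split; last by apply: le_trans H2; exact: ltW.
by rewrite H2 H1.
Qed.

Lemma adm_admissible x s : x <= 1 -> adm x s -> admissible_pts (rcons s x).
Proof.
move=> x1 Hp; split; first exact: path_sorted Hp.
have H0 := order_path_min (@lt_trans _ _) Hp.
have [H1 _] := path_le_last Hp.
rewrite last_rcons in H1.
apply/allP => u Hu; apply/andP; split.
  by move/allP: H0 => /(_ u Hu).
by move/allP: H1 => /(_ u Hu) ux; apply: le_trans x1.
Qed.

Variables (h : R -> 'rV[R]_d) (V : R).
Hypothesis HV : forall s, admissible_pts s -> poly_length h s <= V.

Definition vset (x : R) := [set chain 0 (map h (rcons s x)) | s in adm x].
Definition vv (x : R) := sup (vset x).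

Lemma vset_ub x s : x <= 1 -> adm x s -> chain 0 (map h (rcons s x)) <= V.
Proof.
move=> x1 Hs; apply: le_trans (HV (adm_admissible x1 Hs)).
have -> : poly_length h (rcons s x) = chain 0 (map h (rcons s x)) +
  eucl (h 1 - last 0 (map h (rcons s x))) by rewrite poly_lengthE map_rcons chain_rcons.
rewrite lerDl; exact: eucl_ge0.
Qed.

Lemma has_ub_vset x : x <= 1 -> has_ubound (vset x).
Proof. by move=> x1; exists V => _ [s Hs <-]; exact: vset_ub. Qed.

Lemma vset_n0 x : 0 < x -> vset x !=set0.
Proof. by move=> x0; exists (chain 0 (map h (rcons [::] x))), [::] => //=; rewrite /adm /= x0. Qed.

Lemma vv_ge x s : x <= 1 -> adm x s -> chain 0 (map h (rcons s x)) <= vv x.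
Proof. by move=> x1 Hs; apply: ub_le_sup; [exact: has_ub_vset| exists s]. Qed.

Lemma vv_le_V x : 0 < x -> x <= 1 -> vv x <= V.
Proof. by move=> x0 x1; apply: ge_sup; [exact: vset_n0|move=> _ [s Hs <-]; exact: vset_ub]. Qed.

Lemma vv_step a b : 0 < a -> a < b -> b <= 1 -> vv a + eucl (h b - h a) <= vv b.
Proof.
move=> a0 ab b1; rewrite -lerBrDr; apply: ge_sup; first exact: vset_n0.
move=> _ [s Hs <-]; rewrite lerBrDr.
have -> : chain 0 [seq h i | i <- rcons s a] + eucl (h b - h a) =
  chain 0 [seq h i | i <- rcons (rcons s a) b].
  by rewrite [in RHS]map_rcons chain_rcons map_rcons last_rcons.
apply: vv_ge => //; rewrite /adm rcons_path Hs last_rcons /=; exact: ab.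
Qed.

Lemma vv_mono a b : 0 < a -> a <= b -> b <= 1 -> vv a <= vv b.
Proof.
move=> a0 ab b1; have [->//|ab'] := eqVneq a b.
have ab2 : a < b by rewrite lt_neqAle ab' ab.
apply: le_trans (vv_step a0 ab2 b1); rewrite lerDl; exact: eucl_ge0.
Qed.

Lemma vv_eucl x : 0 < x -> x <= 1 -> eucl (h x) <= vv x.
Proof.
move=> x0 x1; have := vv_ge (s := [::]) x1; rewrite /= chain_cons chain_nil subr0 addr0.
by apply; rewrite /adm /= x0.
Qed.

Lemma vv_two t u : 0 < t -> t < u -> u <= 1 ->
  eucl (h t) + eucl (h u - h t) <= vv u.
Proof.
move=> t0 tu u1; have := vv_ge (s := [:: t]) u1.
rewrite /= !chain_cons chain_nil subr0 addr0; apply.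
by rewrite /adm /= t0 tu.
Qed.

Lemma vv_A u : h x @[x --> 0^'+] --> h 0 -> 0 < u -> u <= 1 ->
  eucl (h 0) + eucl (h u - h 0) <= vv u.
Proof.
move=> Hc u0 u1.
have Hf : (fun t => eucl (h t) + eucl (h u - h t)) @ 0^'+ -->
           eucl (h 0) + eucl (h u - h 0).
  apply: cvgD.
    exact: (continuous_cvg _ (@eucl_continuous R d (h 0)) Hc).
  apply: (continuous_cvg _ (@eucl_continuous R d (h u - h 0))).
  exact: (cvgB (cvg_cst _) Hc).
apply: (cvgr_to_le Hf).
near=> t; apply: vv_two => //.
Unshelve. all: by end_near.
Qed.

End Chain.

Section K.
Variables (R : realType) (d : nat) (h : R -> 'rV[R]_d) (V : R).
Hypothesis HV : forall s, admissible_pts s -> poly_length h s <= V.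
Hypothesis Hcad : cadlag h.
Variables (c : R) (lm : R -> 'rV[R]_d).

Local Notation vv := (vv h).

Definition ww (x : R) := if x <= 0 then c else if x <= 1 then vv x else vv 1.

Hypothesis HA : forall b, 0 < b -> b <= 1 -> c + eucl (h b - h 0) <= vv b.

Lemma c_le_vv b : 0 < b -> b <= 1 -> c <= vv b.
Proof. move=> b0 b1; apply: le_trans (HA b0 b1); rewrite lerDl; exact: eucl_ge0. Qed.

Lemma ww_mono x y : x <= y -> ww x <= ww y.
Proof.
move=> xy; rewrite /ww.
have [y0|y0] := leP y 0.
  by rewrite (le_trans xy y0).
have [x0|x0] := leP x 0.
  by case: ifP => y1; apply: c_le_vv => //; rewrite ?ltr01.
have [x1|x1] := leP x 1.
  by case: ifP => y1; apply: (vv_mono HV) => //; apply: le_trans xy _.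
by have -> : (y <= 1) = false by rewrite leNgt (lt_le_trans x1 xy).
Qed.

Lemma ww_in a : 0 < a -> a <= 1 -> ww a = vv a.
Proof. by move=> a0 a1; rewrite /ww leNgt a0 /= a1. Qed.

Lemma ww0 : ww 0 = c.
Proof. by rewrite /ww lexx. Qed.

Lemma ww_neg a : a <= 0 -> ww a = c.
Proof. by rewrite /ww => ->. Qed.

Lemma KH a b : 0 <= a -> a <= b -> b <= 1 -> eucl (h b - h a) <= ww b - ww a.
Proof.
move=> a0 ab b1; have [->|ab'] := eqVneq a b.
  by rewrite subrr eucl0 subrr.
have ab2 : a < b by rewrite lt_neqAle ab' ab.
have b0 : 0 < b by apply: le_lt_trans ab2.
rewrite (ww_in b0 b1).
move: a0; rewrite le_eqVlt => /orP[/eqP a0|a0].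
  by rewrite -a0 ww0 lerBrDl; exact: HA.
rewrite (ww_in a0 (le_trans ab b1)) lerBrDl; exact: (vv_step HV).
Qed.

Variable r : R.
Hypothesis r0 : 0 <= r.

Lemma Kh s u i : 0 <= s -> s <= 1 -> 0 <= u -> u <= 1 -> `|u - s| < r ->
  `|h u ord0 i - h s ord0 i| <= ww (s + r) - ww (s - r).
Proof.
move=> s0 s1 u0 u1 us.
have [su|us'] := leP s u.
  have := coord_le_eucl (h u - h s) i; rewrite !mxE => H.
  apply: le_trans H _; apply: le_trans (KH s0 su u1) _.
  apply: lerB; apply: ww_mono.
    by move: us; rewrite ger0_norm ?subr_ge0// ltrBlDl addrC => /ltW.
  by rewrite lerBlDr lerDl.
rewrite distrC.
have := coord_le_eucl (h s - h u) i; rewrite !mxE => H.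
apply: le_trans H _; apply: le_trans (KH u0 (ltW us') s1) _.
apply: lerB; apply: ww_mono; first by rewrite lerDl.
by move: us; rewrite distrC ger0_norm ?subr_ge0 ?(ltW us')// ltrBlDl -ltrBlDr => /ltW.
Qed.

Hypothesis Hlm : forall t, 0 < t -> lm t = lim (h x @[x --> t^'-]).

Lemma Klm s t i : 0 <= s -> s <= 1 -> 0 < t -> t <= 1 -> `|t - s| < r ->
  `|lm t ord0 i - h s ord0 i| <= ww (s + r) - ww (s - r).
Proof.
move=> s0 s1 t0 t1 ts.
have Hcv : cvg (h x @[x --> t^'-]) by apply: Hcad.2; rewrite t0 t1.
rewrite (Hlm t0).
have Hf : (fun x => `|h x ord0 i - h s ord0 i|) @ t^'- -->
     `|lim (h x @[x --> t^'-]) ord0 i - h s ord0 i|.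
  apply: cvg_norm; apply: cvgB; last exact: cvg_cst.
  exact: (continuous_cvg _ (@coord_continuous R 1 d ord0 i _) Hcv).
apply: (cvgr_to_le Hf).
have tsr : s - r < t.
  by move: ts; rewrite ltr_norml => /andP[]; rewrite ltrBrDl addrC -ltrBrDl.
have tsr2 : t < s + r.
  by move: ts; rewrite ltr_norml => /andP[_]; rewrite ltrBlDl addrC.
near=> u.
have Hu0 : 0 < u by near: u; exact: nbhs_left_gt.
have Hut : u < t by near: u; exact: nbhs_left_lt.
have Hus : s - r < u by near: u; exact: nbhs_left_gt.
apply: Kh => //; first exact: ltW.
  exact: (le_trans (ltW Hut) t1).
rewrite ltr_norml; apply/andP; split.
  rewrite ltrBrDl; exact: Hus.
by rewrite ltrBlDl; apply: lt_trans Hut tsr2.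
Unshelve. all: by end_near.
Qed.

Hypothesis H0 : forall s i, 0 <= s -> s <= 1 -> s < r ->
  `|lm 0 ord0 i - h s ord0 i| <= ww (s + r) - ww (s - r).

Lemma Kseg s t y i : 0 <= s -> s <= 1 -> 0 <= t -> t <= 1 -> `|t - s| < r ->
  segment (lm t) (h t) y ->
  `|y ord0 i - h s ord0 i| <= ww (s + r) - ww (s - r).
Proof.
move=> s0 s1 t0 t1 ts [l /= l01 <-].
have /andP[l0 l1] : (0 <= l) && (l <= 1) by move: l01; rewrite in_itv.
set W := ww (s + r) - ww (s - r).
have Ha : `|lm t ord0 i - h s ord0 i| <= W.
  move: t0; rewrite le_eqVlt => /orP[/eqP t0|t0].
    rewrite -t0; apply: H0 => //.
    by move: ts; rewrite -t0 sub0r normrN ger0_norm.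
  exact: Klm.
have Hb : `|h t ord0 i - h s ord0 i| <= W by exact: Kh.
rewrite !mxE.
have -> : lm t ord0 i + l * (h t ord0 i - lm t ord0 i) - h s ord0 i =
  (1 - l) * (lm t ord0 i - h s ord0 i) + l * (h t ord0 i - h s ord0 i).
  by ring.
apply: le_trans (ler_normD _ _) _.
rewrite !normrM (ger0_norm l0) ger0_norm ?subr_ge0//.
have -> : W = (1 - l) * W + l * W by ring.
apply: lerD; apply: ler_wpM2l => //; by rewrite subr_ge0.
Qed.

End K.

Section Int.
Variable R : realType.

Lemma int_mono (D : set R) (f1 f2 : R -> \bar R) :
  (forall x, D x -> (0 <= f1 x)%E) -> (forall x, D x -> (f1 x <= f2 x)%E) ->
  (\int[lebesgue_measure]_(x in D) f1 x <= \int[lebesgue_measure]_(x in D) f2 x)%E.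
Proof.
move=> f10 f12.
have f20 : forall x, D x -> (0 <= f2 x)%E by move=> x Dx; exact: le_trans (f10 x Dx) (f12 x Dx).
rewrite (ge0_integralE lebesgue_measure f10) (ge0_integralE lebesgue_measure f20) /=.
apply: le_ereal_sup => _ [g Hg <-]; exists g => //= x.
apply: le_trans (Hg x) _; rewrite /patch; case: ifP => // /set_mem Dx.
exact: f12.
Qed.

Lemma tele_shift (a : nat -> R) (N M : nat) :
  \sum_(j < N) (a (j + M)%N - a j) = \sum_(i < M) (a (N + i)%N - a i).
Proof.
elim: N => [|N IH].
  by rewrite big_ord0 big1 // => i _; rewrite add0n subrr.
rewrite big_ord_recr /= IH.
have -> : \sum_(i < M) (a (N.+1 + i)%N - a i) =
   \sum_(i < M) (a (N + i)%N - a i) + \sum_(i < M) (a (N + i).+1 - a (N + i)%N).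
  by rewrite -big_split /=; apply: eq_bigr => i _; rewrite addSn; ring.
congr (_ + _).
rewrite -(big_mkord xpredT (fun i => a (N + i).+1 - a (N + i)%N)).
rewrite (telescope_sumr_eq (fun i => a (N + i)%N)) //; last by move=> k _; rewrite addnS.
by rewrite addn0.
Qed.

Lemma exists_piece (N : nat) (s : R) : (0 < N)%N -> 0 <= s -> s <= 1 ->
  exists j : 'I_N, j%:R / N%:R <= s <= j.+1%:R / N%:R.
Proof.
move=> N0 s0 s1.
have N0' : 0 < (N%:R : R) by rewrite ltr0n.
suff H : forall n, (0 < n)%N -> s <= n%:R / N%:R ->
    exists j : nat, [/\ (j < n)%N, j%:R / N%:R <= s & s <= j.+1%:R / N%:R].
  have Hn : s <= N%:R / N%:R by rewrite divff ?gt_eqF.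
  have [j [jN H1 H2]] := H N N0 Hn.
  by exists (Ordinal jN); rewrite H1 H2.
elim=> [//|n IH] _ Hs.
case: n IH Hs => [|n] IH Hs.
  by exists 0%N; rewrite mul0r s0 Hs.
have [Hn|Hn] := leP s (n.+1%:R / N%:R).
  by have [j [jn H1 H2]] := IH isT Hn; exists j; split => //; rewrite ltnS ltnW.
by exists n.+1; rewrite ltnSn Hs (ltW Hn).
Qed.

End Int.

Section IntB.
Variable R : realType.

Lemma int_bound (F w : R -> R) (c Vt D r : R) (N k : nat) :
  {homo w : x y / x <= y} -> (forall x, c <= w x) -> (forall x, w x <= Vt) ->
  0 <= D -> 0 <= r -> (0 < N)%N -> r <= k%:R / N%:R ->
  (forall s, 0 <= s -> s <= 1 -> 0 <= F s /\ F s <= D * (r + (w (s + r) - w (s - r)))) ->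
  (\int[lebesgue_measure]_(s in `[0%R, 1%R]) (F s)%:E <=
     (D * (r + (2 * k + 1)%N%:R / N%:R * (Vt - c)))%:E)%E.
Proof.
move=> wmono wc wV D0 r0 N0 rk HF.
have N0' : 0 < (N%:R : R) by rewrite ltr0n.
pose a := fun m : nat => w ((m%:R - k%:R) / N%:R).
pose M := (2 * k + 1)%N.
pose b := fun j : nat => D * (r + (a (j + M)%N - a j)).
pose P := fun j : nat => [set` `[j%:R / N%:R, j.+1%:R / N%:R]] : set R.
pose phi := fun s => \sum_(j < N) b j * \1_(P j) s.
have b0 : forall j, 0 <= b j.
  move=> j; apply: mulr_ge0 => //; apply: addr_ge0 => //; rewrite subr_ge0.
  apply: wmono; apply: ler_wpM2r; first by rewrite invr_ge0 ltW.
  by apply: lerB => //; rewrite ler_nat leq_addr.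
have phi0 : forall s, 0 <= phi s.
  by move=> s; apply: sumr_ge0 => j _; apply: mulr_ge0 => //; exact: ler0n.
have HA : (\int[lebesgue_measure]_(s in `[0%R, 1%R]) (F s)%:E <=
           \int[lebesgue_measure]_(s in `[0%R, 1%R]) (phi s)%:E)%E.
  apply: int_mono => s; rewrite /= in_itv /= => /andP[s0 s1].
    by rewrite lee_fin; case: (HF s s0 s1).
  rewrite lee_fin; have [F0 Fs] := HF s s0 s1.
  have [j /andP[j1 j2]] := exists_piece N0 s0 s1.
  apply: le_trans Fs _.
  have I1 : \1_(P j) s = 1 :> R.
    by rewrite indicE mem_set // /P /= in_itv /= j1 j2.
  have Hj : b j <= phi s.
    rewrite /phi (bigD1 j) //= I1.
    rewrite mulr1 lerDl; apply: sumr_ge0 => i _; apply: mulr_ge0 => //.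
  apply: le_trans Hj; rewrite /b; apply: ler_wpM2l => //; apply: lerD => //.
  apply: lerB; apply: wmono.
    apply: le_trans (lerD j2 rk) _.
    rewrite /M -mulrDl ler_pM2r ?invr_gt0// -natrD.
    rewrite lerBrDr -!natrD ler_nat; lia.
  apply: le_trans (lerB j1 rk).
  by rewrite mulrBl.
apply: le_trans HA _.
have Hphi : forall s, (phi s)%:E = \sum_(j < N) (b j * \1_(P j) s)%:E.
  by move=> s; rewrite sumEFin.
under eq_integral do rewrite Hphi.
rewrite ge0_integral_sum //; last first.
    by move=> j s _; rewrite lee_fin; apply: mulr_ge0 => //; exact: ler0n.
  move=> j; apply/measurable_realfun.measurable_EFinP.
  apply: measurable_realfun.measurable_funM; first exact: measurable_cst.
  apply: measurable_realfun.measurable_indic; exact: measurable_itv.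
apply: (@le_trans _ _ (\sum_(j < N) (b j / N%:R)%:E)%E).
  apply: lee_sum => j _.
  have HZ : (\int[lebesgue_measure]_(x in `[0%R, 1%R]) (b j * \1_(P j) x)%:E =
     (b j)%:E * \int[lebesgue_measure]_(x in `[0%R, 1%R]) (\1_(P j) x)%:E)%E.
    have -> : (\int[lebesgue_measure]_(x in `[0%R, 1%R]) (b j * \1_(P j) x)%:E =
       \int[lebesgue_measure]_(x in `[0%R, 1%R]) ((b j)%:E * (\1_(P j) x)%:E))%E.
      by apply: eq_integral => x _; rewrite EFinM.
    have H1 : forall x : R, [set` `[0%R, 1%R]] x -> (0 <= (\1_(P j) x : R)%:E)%E.
      by move=> x Hx; rewrite lee_fin; exact: ler0n.
    apply: (ge0_integralZl_EFin lebesgue_measure (measurable_itv _) H1 _ (b0 j)).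
    apply/measurable_realfun.measurable_EFinP.
    apply: measurable_realfun.measurable_indic; exact: measurable_itv.
  rewrite HZ.
  rewrite integral_indic //; last exact: measurable_itv.
  rewrite [(b j / _)%:E]EFinM; apply: lee_pmul; [by rewrite lee_fin| exact: measure_ge0 | by [] |].
  apply: le_trans (measureIl _ _ _) _; try exact: measurable_itv.
  rewrite /P /= lebesgue_measure_itv /= lte_fin ltr_pM2r ?invr_gt0// ltr_nat ltnSn.
  by rewrite -EFinD lee_fin -mulNr -mulrDl -natrB // subSnn mul1r.
rewrite sumEFin lee_fin -mulr_suml /b.
have -> : \sum_(i < N) D * (r + (a (i + M)%N - a i)) =
   D * (N%:R * r + \sum_(i < N) (a (i + M)%N - a i)).
  rewrite -mulr_sumr big_split /= sumr_const card_ord mulr_natl.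
  by [].
rewrite tele_shift.
have Hs : \sum_(i < M) (a (N + i)%N - a i) <= M%:R * (Vt - c).
  apply: (@le_trans _ _ (\sum_(i < M) (Vt - c))).
    by apply: ler_sum => i _; apply: lerB; [exact: wV | exact: wc].
  by rewrite sumr_const card_ord mulr_natl.
rewrite -[X in X <= _]mulrA; apply: ler_wpM2l => //.
rewrite ler_pdivrMr //.
have -> : (r + M%:R / N%:R * (Vt - c)) * N%:R = N%:R * r + M%:R * (Vt - c).
  by field; rewrite gt_eqF.
by apply: lerD.
Qed.


End IntB.

Lemma final_arith (R : realType) (d : nat) (L rho : \bar R) (X : R) :
  (0 <= rho)%E -> 0 <= X ->
  (d = 0%N -> (L <= 0)%E) ->
  (forall r (N k : nat), (rho < r%:E)%E -> 0 <= r -> (0 < N)%N -> r <= k%:R / N%:R ->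
     (L <= (d%:R * (r + (2 * k + 1)%N%:R / N%:R * X))%:E)%E) ->
  (L <= (2 * d%:R)%:E * (X + 1)%:E * rho + (pi * d%:R)%:E * rho ^+ 2)%E.
Proof.
move=> rho0 X0 Hd0 HL.
have pi0 : (0 : R) < pi by exact: pi_gt0.
have d0 : (0 : R) <= d%:R by exact: ler0n.
case: rho rho0 HL => [rho| |] //.
- rewrite lee_fin => rho0 HL.
  rewrite -EFin_expe -!EFinM -EFinD.
  apply/lee_addgt0Pr => e e0; rewrite -EFinD.
  pose K := d%:R * (1 + 2 * X) + 1.
  have K0 : 0 < K by rewrite /K; apply: ltr_wpDl => //; apply: mulr_ge0 => //; lra.
  pose eta := e / (2 * K).
  have eta0 : 0 < eta by rewrite /eta divr_gt0 // mulr_gt0.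
  pose r := rho + eta.
  pose N := (Num.trunc (6 * d%:R * X / e)).+1.
  have N0 : (0 < N)%N by [].
  have NR0 : (0 : R) < N%:R by rewrite ltr0n.
  pose k := (Num.trunc (r * N%:R)).+1.
  have r0 : 0 <= r by rewrite /r; apply: addr_ge0 => //; exact: ltW.
  have Hk1 : r * N%:R < k%:R by rewrite /k truncnS_gt.
  have Hk2 : k%:R <= r * N%:R + 1.
    rewrite /k -addn1 natrD lerD2r truncn_le; apply: mulr_ge0 => //; exact: ltW.
  have HN : 6 * d%:R * X / e < N%:R by rewrite /N truncnS_gt.
  apply: le_trans (HL r N k _ r0 N0 _) _.
  + by rewrite lte_fin /r ltrDl.
  + by rewrite ler_pdivlMr //; exact: ltW.
  rewrite lee_fin.
  have S1 : (2 * k + 1)%N%:R / N%:R * X <= (2 * r + 3 / N%:R) * X.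
    apply: ler_wpM2r => //.
    rewrite ler_pdivrMr // mulrDl (_ : 3 / N%:R * N%:R = 3); last first.
      by field; rewrite gt_eqF.
    have E : 2 * r * N%:R = 2 * (r * N%:R) by ring.
    rewrite E natrD natrM; lra.
  have S3 : 3 * d%:R * X / N%:R <= e / 2.
    have HN' : 6 * d%:R * X < N%:R * e by rewrite -ltr_pdivrMr.
    rewrite ler_pdivrMr //.
    have E2 : e / 2 * N%:R = (N%:R * e) / 2 by ring.
    rewrite E2; lra.
  have S4 : d%:R * eta * (1 + 2 * X) <= e / 2.
    have HK : d%:R * (1 + 2 * X) <= K by rewrite /K lerDl.
    have -> : d%:R * eta * (1 + 2 * X) = e / 2 * (d%:R * (1 + 2 * X) / K).
      by rewrite /eta; field; rewrite gt_eqF.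
    apply: ler_piMr; first by rewrite divr_ge0 //; exact: ltW.
    by rewrite ler_pdivrMr // mul1r.
  have S5 : d%:R * rho * (1 + 2 * X) <= 2 * d%:R * (X + 1) * rho + pi * d%:R * rho ^+ 2.
    have H1 : 0 <= pi * d%:R * rho ^+ 2 by apply: mulr_ge0; [apply: mulr_ge0 => //; exact: ltW| exact: sqr_ge0].
    have H2 : 0 <= d%:R * rho by exact: mulr_ge0.
    have E : 2 * d%:R * (X + 1) * rho = d%:R * rho * (1 + 2 * X) + d%:R * rho by ring.
    rewrite E; lra.
  have S2 : d%:R * (r + (2 * k + 1)%N%:R / N%:R * X) <=
      d%:R * rho * (1 + 2 * X) + d%:R * eta * (1 + 2 * X) + 3 * d%:R * X / N%:R.
    apply: le_trans (ler_wpM2l d0 (lerD (lexx r) S1)) _.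
    by rewrite /r le_eqVlt; apply/orP; left; apply/eqP; field; rewrite gt_eqF.
  lra.
- move=> _ _.
  have [d00|dpos] := eqVneq d 0%N.
    by rewrite d00 mulr0n !mulr0 !mul0e adde0; exact: Hd0.
  have dR : (0 : R) < d%:R by rewrite ltr0n lt0n.
  rewrite expe2 mulyy !gt0_muley ?lte_fin ?mulr_gt0 //; last lra.
  by rewrite addye // leey.
Qed.

Section Geo.
Variables (R : realType) (d : nat).

Lemma dist1_fst (p q : R * 'rV[R]_d) : `|p.1 - q.1| <= dist1 p q.
Proof.
rewrite -sqrtr_sqr /dist1 ler_wsqrtr // lerDl.
by apply: sumr_ge0 => i _; exact: sqr_ge0.
Qed.

Lemma dist1_snd (p q : R * 'rV[R]_d) i : `|p.2 ord0 i - q.2 ord0 i| <= dist1 p q.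
Proof.
rewrite -sqrtr_sqr /dist1 ler_wsqrtr // (bigD1 i) //= addrCA lerDl.
apply: addr_ge0; first exact: sqr_ge0.
by apply: sumr_ge0 => j _; exact: sqr_ge0.
Qed.

Lemma dist1_ge0 (p q : R * 'rV[R]_d) : 0 <= dist1 p q.
Proof. exact: sqrtr_ge0. Qed.

Lemma segment_end (a b : 'rV[R]_d) : segment a b b.
Proof.
exists 1; first by rewrite /= in_itv /= ler01 lexx.
by rewrite scale1r addrC subrK.
Qed.

Lemma haus_ge0 (A B : set (R * 'rV[R]_d)) p : A p -> (0 <= hausdorff A B)%E.
Proof.
move=> Ap; rewrite /hausdorff le_max; apply/orP; left.
apply: (@le_trans _ _ (ereal_inf [set (dist1 p q)%:E | q in B])).
  by apply: le_ereal_inf_tmp => _ [q _ <-]; rewrite lee_fin dist1_ge0.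
by apply: ereal_sup_ubound; exists p.
Qed.

Lemma haus_near (A B : set (R * 'rV[R]_d)) p r : A p ->
  (hausdorff A B < r%:E)%E -> exists2 q, B q & dist1 p q < r.
Proof.
move=> Ap Hr.
have H : (ereal_inf [set (dist1 p q)%:E | q in B] < r%:E)%E.
  apply: le_lt_trans Hr; rewrite /hausdorff le_max; apply/orP; left.
  by apply: ereal_sup_ubound; exists p.
have [_ [q Bq <-]] := ereal_inf_lt H.
by rewrite lte_fin => ?; exists q.
Qed.

End Geo.

Section Mode.
Variables (R : realType) (d : nat) (g h : R -> 'rV[R]_d) (V : R).
Hypothesis HV : forall s, admissible_pts s -> poly_length h s <= V.
Hypothesis Hcad : cadlag h.
Variables (c : R) (lm : R -> 'rV[R]_d).
Hypothesis HA : forall b, 0 < b -> b <= 1 -> c + eucl (h b - h 0) <= vv h b.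
Hypothesis Hlm : forall t, 0 < t -> lm t = lim (h x @[x --> t^'-]).
Hypothesis H0 : forall r, 0 <= r -> forall s i, 0 <= s -> s <= 1 -> s < r ->
  `|lm 0 ord0 i - h s ord0 i| <= ww h c (s + r) - ww h c (s - r).
Hypothesis cV : c <= V.
Variable rho : \bar R.
Hypothesis Hrho : forall r, (rho < r%:E)%E -> forall s, 0 <= s -> s <= 1 ->
  exists t, exists y, [/\ 0 <= t, t <= 1, segment (lm t) (h t) y &
                        dist1 (s, g s) (t, y) < r].

Lemma mode_bound r (N k : nat) : (rho < r%:E)%E -> 0 <= r -> (0 < N)%N ->
  r <= k%:R / N%:R ->
  (\int[lebesgue_measure]_(s in `[0%R, 1%R]) (eucl (g s - h s))%:E <=
     (d%:R * (r + (2 * k + 1)%N%:R / N%:R * (V - c)))%:E)%E.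
Proof.
move=> Hr r0 N0 rk.
have wm := ww_mono HV HA.
apply: (int_bound (w := ww h c)) => //.
- move=> x; have [x0|x0] := leP x 0; first by rewrite /ww x0.
  apply: le_trans (wm _ _ (ltW x0)); by rewrite /ww lexx.
- move=> x; rewrite /ww; have [x0|x0] := leP x 0; first exact: cV.
  have [x1|x1] := leP x 1; first exact: (vv_le_V HV).
  exact: (vv_le_V HV ltr01 (lexx 1)).
- move=> s s0 s1; split; first exact: eucl_ge0.
  have [t [y [t0 t1 Hy Hd]]] := Hrho Hr s0 s1.
  have W0 : 0 <= ww h c (s + r) - ww h c (s - r).
    by rewrite subr_ge0; apply: wm; lra.
  apply: eucl_le_bound; first by apply: addr_ge0.
  move=> i; rewrite !mxE.
  have -> : g s ord0 i - h s ord0 i = (g s ord0 i - y ord0 i) + (y ord0 i - h s ord0 i) by ring.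
  apply: le_trans (ler_normD _ _) _; apply: lerD.
    have Hi := dist1_snd (s, g s) (t, y) i; rewrite /= in Hi.
    exact: ltW (le_lt_trans Hi Hd).
  have Hi := dist1_fst (s, g s) (t, y); rewrite /= in Hi.
  apply: (Kseg HV Hcad HA r0 Hlm (H0 r0) (t := t)) => //.
  by rewrite distrC; exact: le_lt_trans Hi Hd.
Qed.

End Mode.

Unset Implicit Arguments. Set Strict Implicit.

Theorem lemma4p3 (R : realType) (d : nat) (g h : R -> 'rV[R]_d) :
  BV h -> cadlag g ->
  ((\int[lebesgue_measure]_(s in `[0%R, 1%R]) (eucl (g s - h s))%:E <=
     (2 * d%:R)%:E * (Var h - (eucl (h 0))%:E + 1) * rho2 g h
     + (pi * d%:R)%:E * rho2 g h ^+ 2)%E /\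
   (\int[lebesgue_measure]_(s in `[0%R, 1%R]) (eucl (g s - h s))%:E <=
     (2 * d%:R)%:E * (Var h + 1) * rho2' g h
     + (pi * d%:R)%:E * rho2' g h ^+ 2)%E).
Proof.
move=> [Hcad HVar] _.
have Hadm0 : admissible_pts (R:=R) [::] by [].
have Hge : ((poly_length h [::])%:E <= Var h)%E.
  by apply: ereal_sup_ubound; exists [::].
have [V HVe] : exists V, Var h = V%:E.
  move: HVar Hge; case: (Var h) => [V| |] //; first by move=> _ _; exists V.
have HV : forall s, admissible_pts s -> poly_length h s <= V.
  move=> s Hs; rewrite -lee_fin -HVe; apply: ereal_sup_ubound; by exists s.
have Hc0 : h x @[x --> 0^'+] --> h 0 by apply: Hcad.1; rewrite lexx ltr01.
have HAv := vv_A HV Hc0.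
have Hd0 : d = 0%N ->
    (\int[lebesgue_measure]_(s in `[0%R, 1%R]) (eucl (g s - h s))%:E <= 0)%E.
  move=> d0; rewrite integral0_eq //= => x _.
  rewrite /eucl big1 ?sqrtr0 // => i _.
  have := ltn_ord i; move: (nat_of_ord i) => n Hn; exfalso; move: Hn.
  by rewrite d0.
have Hpl0 : 0 <= V.
  have H1 := HV _ Hadm0; apply: le_trans H1.
  rewrite poly_lengthE /= chain_cons chain_nil addr0.
  exact: eucl_ge0.
have Hhl : forall t, 0 < t -> leftlim h t = lim (h x @[x --> t^'-]).
  by move=> t t0; rewrite /leftlim gt_eqF.
have Hhl' : forall t, 0 < t -> leftlim' h t = lim (h x @[x --> t^'-]).
  by move=> t t0; rewrite /leftlim' gt_eqF.
have Hmem : forall (lm : R -> 'rV[R]_d) s, 0 <= s -> s <= 1 -> cgraph_with lm g (s, g s).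
  by move=> lm s s0 s1; split; [rewrite /= s0 s1| exact: segment_end].
split.
-
  set c := eucl (h 0).
  have HA : forall b, 0 < b -> b <= 1 -> c + eucl (h b - h 0) <= vv h b by exact: HAv.
  have cV : c <= V.
    apply: le_trans (vv_le_V HV ltr01 (lexx 1)).
    apply: le_trans (HAv 1 ltr01 (lexx 1)); rewrite lerDl; exact: eucl_ge0.
  have H0 : forall r, 0 <= r -> forall s i, 0 <= s -> s <= 1 -> s < r ->
      `|leftlim h 0 ord0 i - h s ord0 i| <= ww h c (s + r) - ww h c (s - r).
    move=> r r0 s i s0 s1 sr; rewrite /leftlim eqxx.
    apply: (Kh HV HA r0 (u := 0)) => //.
    by rewrite sub0r normrN ger0_norm.
  have Hrho : forall r, (rho2 g h < r%:E)%E -> forall s, 0 <= s -> s <= 1 ->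
      exists t, exists y, [/\ 0 <= t, t <= 1, segment (leftlim h t) (h t) y &
                        dist1 (s, g s) (t, y) < r].
    move=> r Hr s s0 s1.
    have [[t y] [/= /andP[t0 t1] Hy] Hd] := haus_near (Hmem _ s s0 s1) Hr.
    by exists t, y.
  have := final_arith (L := \int[lebesgue_measure]_(s in `[0%R, 1%R]) (eucl (g s - h s))%:E)
    (rho := rho2 g h) (X := V - c) _ _ Hd0
    (fun r N k Hr r0 N0 rk => mode_bound HV Hcad HA Hhl H0 cV Hrho Hr r0 N0 rk).
  rewrite HVe -EFinB.
  apply.
  + exact: haus_ge0 (Hmem _ 0 (lexx 0) ler01).
  + by rewrite subr_ge0.
-
  have HA : forall b, 0 < b -> b <= 1 -> 0 + eucl (h b - h 0) <= vv h b.
    move=> b b0 b1; apply: le_trans (HAv b b0 b1); rewrite lerD2r; exact: eucl_ge0.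
  have Hw0 : forall x, 0 < x -> eucl (h 0) <= ww h 0 x.
    move=> x x0; rewrite /ww (_ : (x <= 0) = false); last by rewrite leNgt x0.
    have [x1|x1] := leP x 1.
      apply: le_trans (HAv x x0 x1); rewrite lerDl; exact: eucl_ge0.
    apply: le_trans (HAv 1 ltr01 (lexx 1)); rewrite lerDl; exact: eucl_ge0.
  have H0 : forall r, 0 <= r -> forall s i, 0 <= s -> s <= 1 -> s < r ->
      `|leftlim' h 0 ord0 i - h s ord0 i| <= ww h 0 (s + r) - ww h 0 (s - r).
    move=> r r0 s i s0 s1 sr; rewrite /leftlim' eqxx mxE sub0r normrN.
    have -> : ww h 0 (s - r) = 0 by rewrite /ww ifT //; lra.
    rewrite subr0; apply: le_trans (coord_le_eucl _ _) _.
    move: s0; rewrite le_eqVlt => /orP[/eqP s0|s0].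
      by rewrite -s0 add0r; apply: Hw0; rewrite -s0 in sr.
    have s1' : ww h 0 s = vv h s.
      by rewrite /ww (_ : (s <= 0) = false) ?s1 // leNgt s0.
    apply: le_trans (ww_mono HV HA (_ : s <= s + r)); last by rewrite lerDl.
    by rewrite s1'; exact: (vv_eucl HV).
  have cV : 0 <= V := Hpl0.
  have Hrho : forall r, (rho2' g h < r%:E)%E -> forall s, 0 <= s -> s <= 1 ->
      exists t, exists y, [/\ 0 <= t, t <= 1, segment (leftlim' h t) (h t) y &
                        dist1 (s, g s) (t, y) < r].
    move=> r Hr s s0 s1.
    have [[t y] [/= /andP[t0 t1] Hy] Hd] := haus_near (Hmem _ s s0 s1) Hr.
    by exists t, y.
  have := final_arith (L := \int[lebesgue_measure]_(s in `[0%R, 1%R]) (eucl (g s - h s))%:E)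
    (rho := rho2' g h) (X := V - 0) _ _ Hd0
    (fun r N k Hr r0 N0 rk => mode_bound HV Hcad HA Hhl' H0 cV Hrho Hr r0 N0 rk).
  rewrite HVe subr0.
  apply.
  + exact: haus_ge0 (Hmem _ 0 (lexx 0) ler01).
  + by [].
Qed.
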